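(* Let $\Xi\subseteq\mathbb{R}^n$ be as in the context, $\Delta_1=[0,1]$, and let $\tilde{A}^k\in\mathbb{R}^{1\times n}$ for $k\in K=\{1,\dots,\kappa\}$. Consider $\mathcal{S}^1=\{(x,y_1,w)\in\Xi\times\Delta_1\times\mathbb{R}^n : y_1x_i=w_i\ \forall i\in N\}$ and $\mathcal{D}=\{(x,y_1,w,z)\in\Xi\times\Delta_1\times\mathbb{R}^n\times\mathbb{R}^\kappa : \tilde{A}^kw=z_k\ \forall k\in K\}$. Then $\mathrm{conv}\big((\mathcal{S}^1\times\mathbb{R}^\kappa)\cap\mathcal{D}\big)=\big(\mathrm{conv}(\mathcal{S}^1)\times\mathbb{R}^\kappa\big)\cap\mathcal{D}$.
   Context: $N=\{1,\dots,n\}$. $\Xi=\{x\in\mathbb{R}^n : Ex\ge f,\ 0\le x\le u\}$ is a network polytope of a directed network whose arcs are indexed by $N$: the rows of $Ex\ge f$ are, for each node $v$, the flow-balance constraint $\sum_{a\text{ out of }v}x_a-\sum_{a\text{ into }v}x_a\ge f_v$ and its negation $-\sum_{a\text{ out of }v}x_a+\sum_{a\text{ into }v}x_a\ge -f_v$, and $u$ is the arc-capacity vector. *)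

(* Defs.v *)
From mathcomp Require Import all_boot all_algebra.
From mathcomp Require Import reals.
Set Implicit Arguments. Unset Strict Implicit. Unset Printing Implicit Defensive.
Import GRing.Theory Num.Theory.
Local Open Scope ring_scope.

Definition conv (R : realType) (V : lmodType R) (S : V -> Prop) : V -> Prop :=
  fun p => exists (m : nat) (lam : 'I_m -> R) (q : 'I_m -> V),
    [/\ forall i, 0 <= lam i, \sum_(i < m) lam i = 1,
        forall i, S (q i) & p = \sum_(i < m) lam i *: q i].

(* Network polytope Xi = {x | E x >= f, 0 <= x <= u} of a directed network
   with nodes 'I_nv and arcs 'I_n; arc a goes from node (tl a) to node (hd a).
   For each node v the rows of E are the flow-balance constraint and its
   negation. *)
Definition outflow (R : realType) (n nv : nat) (tl : 'I_n -> 'I_nv)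
  (x : 'cV[R]_n) (v : 'I_nv) : R := \sum_(a < n | tl a == v) x a 0.
Definition inflow (R : realType) (n nv : nat) (hd : 'I_n -> 'I_nv)
  (x : 'cV[R]_n) (v : 'I_nv) : R := \sum_(a < n | hd a == v) x a 0.

Definition Xi (R : realType) (n nv : nat) (tl hd : 'I_n -> 'I_nv)
  (f : 'I_nv -> R) (u : 'cV[R]_n) (x : 'cV[R]_n) : Prop :=
  (forall v, outflow tl x v - inflow hd x v >= f v) /\
  (forall v, - outflow tl x v + inflow hd x v >= - f v) /\
  (forall a, 0 <= x a 0 <= u a 0).

Definition Delta1 (R : realType) (y : R) : Prop := 0 <= y <= 1.

Definition S1 (R : realType) (n nv : nat) (tl hd : 'I_n -> 'I_nv)
  (f : 'I_nv -> R) (u : 'cV[R]_n)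
  (p : 'cV[R]_n * R^o * 'cV[R]_n) : Prop :=
  let: (x, y1, w) := p in
  Xi tl hd f u x /\ Delta1 y1 /\ (forall i, y1 * x i 0 = w i 0).

Definition Dset (R : realType) (n nv kappa : nat) (tl hd : 'I_n -> 'I_nv)
  (f : 'I_nv -> R) (u : 'cV[R]_n) (At : 'I_kappa -> 'rV[R]_n)
  (p : 'cV[R]_n * R^o * 'cV[R]_n * 'cV[R]_kappa) : Prop :=
  let: (x, y1, w, z) := p in
  Xi tl hd f u x /\ Delta1 y1 /\ (forall k, (At k *m w) 0 0 = z k 0).

Definition timesRk (R : realType) (n kappa : nat)
  (A : 'cV[R]_n * R^o * 'cV[R]_n -> Prop)
  (p : 'cV[R]_n * R^o * 'cV[R]_n * 'cV[R]_kappa) : Prop := A p.1.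

(* Main.v *)
Require Import Defs.
From mathcomp Require Import all_boot all_algebra.
From mathcomp Require Import reals.
Import GRing.Theory Num.Theory.
Local Open Scope ring_scope.

Section Helpers.
Variable R : realType.

Lemma fst_sum (V W : lmodType R) m (F : 'I_m -> V * W) :
  (\sum_(i < m) F i).1 = \sum_(i < m) (F i).1.
Proof. by apply: (big_morph fst). Qed.

Lemma snd_sum (V W : lmodType R) m (F : 'I_m -> V * W) :
  (\sum_(i < m) F i).2 = \sum_(i < m) (F i).2.
Proof. by apply: (big_morph snd). Qed.

Lemma comb_ge m (lam g : 'I_m -> R) c :
  (forall i, 0 <= lam i) -> \sum_(i < m) lam i = 1 -> (forall i, c <= g i) ->
  c <= \sum_(i < m) lam i * g i.
Proof.
move=> l0 l1 hg.
have -> : c = \sum_(i < m) lam i * c by rewrite -big_distrl /= l1 mul1r.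
by apply: ler_sum => i _; apply: ler_wpM2l.
Qed.

Lemma comb_le m (lam g : 'I_m -> R) c :
  (forall i, 0 <= lam i) -> \sum_(i < m) lam i = 1 -> (forall i, g i <= c) ->
  \sum_(i < m) lam i * g i <= c.
Proof.
move=> l0 l1 hg.
have -> : c = \sum_(i < m) lam i * c by rewrite -big_distrl /= l1 mul1r.
by apply: ler_sum => i _; apply: ler_wpM2l.
Qed.

Lemma comb_entry n k m (lam : 'I_m -> R) (x : 'I_m -> 'M[R]_(n, k)) a b :
  (\sum_(i < m) lam i *: x i) a b = \sum_(i < m) lam i * x i a b.
Proof. by rewrite summxE; apply: eq_bigr => i _; rewrite mxE. Qed.

Lemma comb_flow n (P : pred 'I_n) m (lam : 'I_m -> R) (x : 'I_m -> 'cV[R]_n) :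
  \sum_(a < n | P a) (\sum_(i < m) lam i *: x i) a 0 =
  \sum_(i < m) lam i * \sum_(a < n | P a) x i a 0.
Proof.
under eq_bigr => a _ do rewrite comb_entry.
rewrite exchange_big /=; apply: eq_bigr => i _; by rewrite big_distrr.
Qed.

Lemma Xi_conv n nv (tl hd : 'I_n -> 'I_nv) f u m (lam : 'I_m -> R) x :
  (forall i, 0 <= lam i) -> \sum_(i < m) lam i = 1 ->
  (forall i, Xi tl hd f u (x i)) -> Xi tl hd f u (\sum_(i < m) lam i *: x i).
Proof.
move=> l0 l1 hx; rewrite /Xi /outflow /inflow.
split; [|split].
- move=> v; rewrite !comb_flow -sumrB.
  under eq_bigr => i _ do rewrite -mulrBr.
  by apply: comb_ge => // i; case: (hx i) => h _; exact: h.
- move=> v; rewrite !comb_flow -sumrN -big_split /=.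
  under eq_bigr => i _ do rewrite -mulrN -mulrDr.
  by apply: comb_ge => // i; case: (hx i) => _ [h _]; exact: h.
- move=> a; rewrite comb_entry; apply/andP; split.
  + by apply: comb_ge => // i; case: (hx i) => _ [_ /(_ a) /andP[]].
  + by apply: comb_le => // i; case: (hx i) => _ [_ /(_ a) /andP[]].
Qed.

Lemma Delta_conv m (lam : 'I_m -> R) (y : 'I_m -> R^o) :
  (forall i, 0 <= lam i) -> \sum_(i < m) lam i = 1 ->
  (forall i, Delta1 (y i)) -> Delta1 (\sum_(i < m) lam i *: y i).
Proof.
move=> l0 l1 hy; rewrite /Delta1; apply/andP; split.
- by apply: comb_ge => // i; case/andP: (hy i).
- by apply: comb_le => // i; case/andP: (hy i).
Qed.

Lemma At_comb n m (lam : 'I_m -> R) (A : 'rV[R]_n) (w : 'I_m -> 'cV[R]_n) :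
  (A *m \sum_(i < m) lam i *: w i) 0 0 = \sum_(i < m) lam i * (A *m w i) 0 0.
Proof.
rewrite mulmx_sumr summxE; apply: eq_bigr => i _.
by rewrite -scalemxAr mxE.
Qed.

End Helpers.

Theorem proposition3 (R : realType) (n nv kappa : nat)
  (tl hd : 'I_n -> 'I_nv) (f : 'I_nv -> R) (u : 'cV[R]_n)
  (At : 'I_kappa -> 'rV[R]_n)
  (p : 'cV[R]_n * R^o * 'cV[R]_n * 'cV[R]_kappa) :
  conv (fun q : 'cV[R]_n * R^o * 'cV[R]_n * 'cV[R]_kappa => timesRk (S1 tl hd f u) q /\ Dset tl hd f u At q) p
  <-> (timesRk (conv (S1 tl hd f u)) p /\ Dset tl hd f u At p).
Proof.
split.
- case=> m [lam [q [l0 l1 hq ->]]].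
  split.
  + rewrite /timesRk fst_sum; exists m, lam, (fun i => (q i).1); split => //.
    by move=> i; case: (hq i).
  + rewrite /Dset.
    have -> : \sum_(i < m) lam i *: q i =
      (\sum_(i < m) lam i *: (q i).1.1.1, \sum_(i < m) lam i *: (q i).1.1.2,
       \sum_(i < m) lam i *: (q i).1.2, \sum_(i < m) lam i *: (q i).2).
      have e1 : (\sum_(i < m) lam i *: q i).1.1.1 = \sum_(i < m) lam i *: (q i).1.1.1 by rewrite !fst_sum.
      have e2 : (\sum_(i < m) lam i *: q i).1.1.2 = \sum_(i < m) lam i *: (q i).1.1.2 by rewrite !fst_sum snd_sum.
      have e3 : (\sum_(i < m) lam i *: q i).1.2 = \sum_(i < m) lam i *: (q i).1.2 by rewrite !fst_sum snd_sum.
      have e4 : (\sum_(i < m) lam i *: q i).2 = \sum_(i < m) lam i *: (q i).2 by rewrite snd_sum.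
      rewrite -e1 -e2 -e3 -e4; by case: (\sum_(i < m) lam i *: q i) => [[[]]].
    split; [|split].
    * apply: Xi_conv => // i; case: (hq i) => _.
      by case: (q i) => [[[x y] w] z] [].
    * apply: Delta_conv => // i; case: (hq i) => _.
      by case: (q i) => [[[x y] w] z] [_ []].
    * move=> k; rewrite At_comb comb_entry; apply: eq_bigr => i _.
      case: (hq i) => _; case: (q i) => [[[x y] w] z] [_ [_ h]].
      by rewrite h.
- case: p => [[[x y] w] z]; rewrite /timesRk /=.
  case=> [[m [lam [q [l0 l1 hq hs]]]] [hX [hD hz]]].
  pose zc i : 'cV[R]_kappa := \col_k (At k *m (q i).2) 0 0.
  have zcE : forall i k, zc i k 0 = (At k *m (q i).2) 0 0 by move=> i k; rewrite /zc mxE.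
  clearbody zc.
  exists m, lam, (fun i => (q i, zc i)); split => //.
  + move=> i; split; first exact: hq.
    move: (hq i) (zcE i); rewrite /Dset.
    case: (q i) => [[x' y'] w'] [h1 [h2 _]] /= E.
    split; first exact: h1.
    split; first exact: h2.
    by move=> k; rewrite E.
  + have -> : \sum_(i < m) lam i *: (q i, zc i) =
      (\sum_(i < m) lam i *: q i, \sum_(i < m) lam i *: zc i).
      by rewrite [LHS]surjective_pairing fst_sum snd_sum.
    rewrite -hs; congr pair.
    apply/matrixP => k j; rewrite ord1 comb_entry -hz.
    have -> : w = (\sum_(i < m) lam i *: q i).2 by rewrite -hs.
    rewrite snd_sum At_comb; apply: eq_bigr => i _.
    by rewrite zcE.
Qed.
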